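(* Let $P^n_\omega$ be a non-trivially weighted edge-weighted path on $n$ vertices whose edge ideal $I(P^n_\omega)$ is integrally closed. Then $P^n_\omega$ has at most two edges with non-trivial weight.
   Context: $\mathbb{K}$ is a field, $S=\mathbb{K}[x_1,\dots,x_n]$. For a simple graph $G$ with weight function $\omega:E(G)\to\mathbb{Z}_{>0}$, $I(G_\omega)=(x_i^{\omega(e)}x_j^{\omega(e)}\mid e=\{x_i,x_j\}\in E(G))$. An edge $e$ has non-trivial weight if $\omega(e)\ge 2$; $G_\omega$ is non-trivially weighted if at least one edge has non-trivial weight. An ideal $I$ is integrally closed if it equals its integral closure $\overline{I}$ (the set of $f\in S$ satisfying an equation $f^k+c_1f^{k-1}+\cdots+c_k=0$ with $c_i\in I^i$). *)

(* Defs.v *)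
From HB Require Import structures.
From mathcomp Require Import all_boot all_order all_algebra.
From mathcomp Require Import mpoly.
Set Implicit Arguments. Unset Strict Implicit. Unset Printing Implicit Defensive.
Import GRing.Theory.
Local Open Scope ring_scope.

(* Membership in the k-th power I^k of the ideal I generated by the finite
   list of generators s of a commutative ring R: I^k is generated by all
   products of k generators (I^0 = R). *)
Definition in_ideal_pow (R : comNzRingType) (s : seq R) (k : nat) (f : R) : Prop :=
  exists c : {ffun 'I_k -> 'I_(size s)} -> R,
    f = \sum_(t : {ffun 'I_k -> 'I_(size s)}) c t * \prod_(j < k) s`_(t j).

Definition in_ideal (R : comNzRingType) (s : seq R) (f : R) : Prop :=
  in_ideal_pow s 1 f.

Definition integral_over_ideal (R : comNzRingType) (s : seq R) (f : R) : Prop :=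
  exists k : nat, (0 < k)%N /\
    exists c : nat -> R,
      (forall i : nat, (1 <= i <= k)%N -> in_ideal_pow s i (c i)) /\
      f ^+ k + \sum_(1 <= i < k.+1) c i * f ^+ (k - i) = 0.

(* I = (s) equals its integral closure (I is always contained in it). *)
Definition integrally_closed (R : comNzRingType) (s : seq R) : Prop :=
  forall f : R, integral_over_ideal s f -> in_ideal s f.

(* The path P^{m+1} on the m+1 vertices x_0,...,x_m (variables of
   K[x_0..x_m]) has the m edges {x_i, x_{i+1}}, i : 'I_m. *)
Definition path_edge_gens (K : fieldType) (m : nat) (w : 'I_m -> nat)
  : seq {mpoly K[m.+1]} :=
  [seq 'X_(widen_ord (leqnSn m) i) ^+ w i * 'X_(lift ord0 i) ^+ w i
     | i <- enum 'I_m].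

(* Main.v *)
Require Import Defs.
From HB Require Import structures.
From mathcomp Require Import all_boot all_order all_algebra.
From mathcomp Require Import mpoly.
From mathcomp Require Import zify.
Import GRing.Theory.
Local Open Scope ring_scope.

Ltac beq := repeat (let E := fresh "E" in case: eqP => /= E); lia.

Lemma coef_mulX0 (K : fieldType) n (p : {mpoly K[n]}) (m k : 'X_{1..n}) :
  ~~ (m <= k)%MM -> (p * 'X_[m])@_k = 0.
Proof.
move=> Hmk; rewrite mcoeffM big1 // => -[k1 k2] /= /eqP Hk.
rewrite mcoeffX; case: eqP => [Em|_]; last by rewrite mulr0.
case/negP: Hmk; apply/mnm_lepP => j.
have := congr1 (fun mm : 'X_{1..n} => mm j) Hk; rewrite /= mnmDE -Em => ->.
exact: leq_addl.
Qed.

Definition mg m (w : 'I_m -> nat) (e : 'I_m) : 'X_{1..m.+1} :=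
  [multinom (((val j == val e) + (val j == (val e).+1)) * w e)%N | j < m.+1].

Arguments mg {m}.

Lemma nth_gens (K : fieldType) m (w : 'I_m -> nat) (j : nat) (hj : (j < m)%N) :
  (path_edge_gens K w)`_j = 'X_[mg w (Ordinal hj)].
Proof.
rewrite /path_edge_gens (nth_map (Ordinal hj)) ?size_enum_ord //.
have -> : nth (Ordinal hj) (enum 'I_m) j = Ordinal hj.
  by apply/val_inj; rewrite /= nth_enum_ord.
rewrite !mpolyXn -mpolyXD; congr 'X_[_]; apply/mnmP => x.
rewrite mnmDE !mulmnE !mnm1E mnmE.
rewrite -[widen_ord _ _ == x]val_eqE -[lift ord0 _ == x]val_eqE /=.
rewrite /bump leq0n add1n.
beq.
Qed.

Lemma bad_pair (K : fieldType) m (w : 'I_m -> nat) (i k : 'I_m)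
  (hik : (i < k)%N) (hk2 : val k <> (val i).+2)
  (wi : (2 <= w i)%N) (wk : (2 <= w k)%N)
  (w_pos : forall e, (0 < w e)%N) : ~ integrally_closed (path_edge_gens K w).
Proof.
have {}hk2 : nat_of_ord k <> (nat_of_ord i).+2 := hk2.
pose F (x : nat) : nat := ((x == i) * (w i - 1) + (x == i.+1) * (w i + w k)
   + (x == k) * (w i + w k) + (x == k.+1) * (w k - 1))%N.
pose mu : 'X_{1..m.+1} := [multinom F (val j) | j < m.+1].
pose R (x : nat) : nat := ((x == i) * (w i - 2) + (x == i.+1) * (w i + 2 * w k)
   + (x == k) * (2 * w i + w k) + (x == k.+1) * (w k - 2))%N.
pose mr : 'X_{1..m.+1} := [multinom R (val j) | j < m.+1].
have Ei : Ordinal (ltn_ord i) = i by apply: val_inj.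
have Ek : Ordinal (ltn_ord k) = k by apply: val_inj.
have Hid : (mu *+ 2 = mr + mg w i + mg w k)%MM.
  apply/mnmP => j; rewrite mulmnE !mnmDE !mnmE /F /R /=.
  beq.
have hs : size (path_edge_gens K w) = m by rewrite size_map size_enum_ord.
have Hnd : forall e (he : (e < m)%N), ~~ (mg w (Ordinal he) <= mu)%MM.
  move=> e he; apply/negP => /mnm_lepP Hle.
  case: (eqVneq e i) => [Eei|Nei].
    have hx : (i < m.+1)%N by lia.
    have := Hle (Ordinal hx); rewrite !mnmE /F /=.
    have -> : Ordinal he = i by apply: val_inj.
    subst e; beq.
  case: (eqVneq e k) => [Eek|Nek].
    have hx : (k.+1 < m.+1)%N by rewrite ltnS.
    have := Hle (Ordinal hx); rewrite !mnmE /F /=.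
    have -> : Ordinal he = k by apply: val_inj.
    subst e; beq.
  pose x := if (e == i.+1) || (e == k.+1) then e.+1 else e.
  have hx : (x < m.+1)%N by rewrite /x; case: ifP => _; lia.
  have := Hle (Ordinal hx); rewrite !mnmE /F /=.
  have := w_pos (Ordinal he).
  move: Nei Nek; rewrite /x; case Hc: ((e == i.+1) || (e == k.+1)); move: Hc; beq.
move=> /(_ 'X_[mu]) H.
have : in_ideal (path_edge_gens K w) 'X_[mu].
  apply: H; exists 2%N; split=> //.
  exists (fun n => if n == 2%N then - ('X_[mr] * 'X_[mg w i] * 'X_[mg w k]) else 0).
  split.
  - move=> n /andP [n1 n2]; case: eqP => [->|_]; last first.
      by exists (fun _ => 0); rewrite big1 // => t _; rewrite mul0r.
    have hi' : (i < size (path_edge_gens K w))%N by rewrite hs.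
    have hk' : (k < size (path_edge_gens K w))%N by rewrite hs.
    pose t0 : {ffun 'I_2 -> 'I_(size (path_edge_gens K w))} :=
      [ffun j : 'I_2 => if val j == 0%N then Ordinal hi' else Ordinal hk'].
    exists (fun t => if t == t0 then - 'X_[mr] else 0).
    rewrite (bigD1 t0) //= [X in _ + X]big1 ?addr0; last first.
      by move=> t Ht; rewrite (negbTE Ht) mul0r.
    rewrite eqxx big_ord_recr big_ord_recr big_ord0 /= !ffunE /=.
    rewrite (@nth_gens K m w _ (ltn_ord i)) (@nth_gens K m w _ (ltn_ord k)) Ei Ek.
    by rewrite mul1r mulNr !mulrA.
  - rewrite big_nat_recr //= big_nat1 /= subnn expr0 mulr1 expr1 mul0r add0r.
    by rewrite mpolyXn Hid !mpolyXD subrr.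
case=> c Hc.
have := congr1 (mcoeff mu) Hc.
rewrite mcoeffX eqxx raddf_sum /= big1.
  by move/eqP; rewrite oner_eq0.
move=> t _; rewrite big_ord1.
have ht : (t ord0 < m)%N.
  by move: (ltn_ord (t ord0)); move: (nat_of_ord (t ord0)) => j; rewrite hs.
by rewrite (@nth_gens K m w _ ht) coef_mulX0.
Qed.

Theorem corollary4p5 (K : fieldType) (m : nat) (w : 'I_m -> nat)
    (w_pos : forall i : 'I_m, (0 < w i)%N)
    (nontriv : exists i : 'I_m, (2 <= w i)%N)
    (closed : integrally_closed (path_edge_gens K w)) :
  (#|[set i : 'I_m | (2 <= w i)%N]| <= 2)%N.
Proof.
rewrite leqNgt; apply/negP => /card_gt2P [x [y [z [[hx hy hz] [xy yz zx]]]]].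
have H2 : forall p q : 'I_m, p \in [set i : 'I_m | (2 <= w i)%N] ->
    q \in [set i : 'I_m | (2 <= w i)%N] -> p != q ->
    (nat_of_ord p = (nat_of_ord q).+2 \/ nat_of_ord q = (nat_of_ord p).+2).
  move=> p q; rewrite !inE => hp hq; rewrite -val_eqE /= => /eqP pq.
  case: (ltngtP p q) => [lpq|lqp|epq]; last by [].
  - case: (eqVneq (nat_of_ord q) (nat_of_ord p).+2) => [E|N]; first by right.
    by exfalso; apply: (@bad_pair K m w p q) => //; apply/eqP.
  - case: (eqVneq (nat_of_ord p) (nat_of_ord q).+2) => [E|N]; first by left.
    by exfalso; apply: (@bad_pair K m w q p) => //; apply/eqP.
have := H2 _ _ hx hy xy; have := H2 _ _ hy hz yz; have := H2 _ _ hz hx zx.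
move: xy yz zx; rewrite -!val_eqE /= => /eqP ? /eqP ? /eqP ?.
lia.
Qed.
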